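(* Let $G\subset\mathrm{Isom}(\mathbf H^n)$ be a non-elementary finitely generated torsion-free Kleinian group and $H$ a subgroup of $G$ with $\mathrm{Ax}(G)=\mathrm{Ax}(H)$. Then for every hyperbolic element $g\in G$ there is an integer $n>0$ with $g^n\in H$.
   Context: A Kleinian group is a discrete subgroup of $\mathrm{Isom}(\mathbf{H}^n)$; non-elementary means its limit set has at least three points. A hyperbolic element is an isometry with exactly two fixed points, both at infinity; its axis is the geodesic joining them. $\mathrm{Ax}(G)$ is the set of axes of hyperbolic elements of $G$. *)

(* Defs.v *)
(* real hyperbolic geometry via the hyperboloid model.
   Isom(H^n) is identified with O^+(n,1) (Lorentz matrices preserving the upper sheet).
   Vectors/matrices are functions on nat; only indices 0..n are meaningful. *)
From Stdlib Require Import Reals List Arith Bool.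
Open Scope R_scope.

Definition vec := nat -> R.
Definition mat := nat -> nat -> R.

Definition eta (i : nat) : R := if Nat.eqb i 0 then -1 else 1.

Definition lor (n : nat) (x y : vec) : R := sum_f_R0 (fun k => eta k * x k * y k) n.

(* matrices are normalized to vanish outside the index range 0..n *)
Definition inrange (n i j : nat) : bool := Nat.leb i n && Nat.leb j n.

Definition mmul (n : nat) (A B : mat) : mat :=
  fun i j => if inrange n i j then sum_f_R0 (fun k => A i k * B k j) n else 0.

Definition mid (n : nat) : mat :=
  fun i j => if inrange n i j && Nat.eqb i j then 1 else 0.

Fixpoint mpow (n : nat) (A : mat) (k : nat) : mat :=
  match k with O => mid n | S k' => mmul n A (mpow n A k') end.

Definition mvec (n : nat) (A : mat) (x : vec) : vec :=
  fun i => sum_f_R0 (fun k => A i k * x k) n.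

Definition clean (n : nat) (A : mat) : Prop :=
  forall i j, (n < i)%nat \/ (n < j)%nat -> A i j = 0.

Definition Lorentz (n : nat) (A : mat) : Prop :=
  clean n A /\ (forall x y, lor n (mvec n A x) (mvec n A y) = lor n x y) /\ 0 < A 0%nat 0%nat.

(* points of H^n and of its boundary (boundary point = null ray, normalized xi_0 = 1) *)
Definition hpt (n : nat) (x : vec) : Prop := lor n x x = -1 /\ 0 < x 0%nat.
Definition bpt (n : nat) (xi : vec) : Prop := xi 0%nat = 1 /\ lor n xi xi = 0.
Definition veq (n : nat) (x y : vec) : Prop := forall i, (i <= n)%nat -> x i = y i.

Definition fixes_pt (n : nat) (A : mat) (x : vec) : Prop := veq n (mvec n A x) x.
Definition fixes_bpt (n : nat) (A : mat) (xi : vec) : Prop :=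
  exists t, 0 < t /\ forall i, (i <= n)%nat -> mvec n A xi i = t * xi i.

Definition hyp_fixed (n : nat) (g : mat) (xi et : vec) : Prop :=
  bpt n xi /\ bpt n et /\ ~ veq n xi et /\ fixes_bpt n g xi /\ fixes_bpt n g et /\
  (forall z, bpt n z -> fixes_bpt n g z -> veq n z xi \/ veq n z et).

Definition hyperbolic (n : nat) (g : mat) : Prop :=
  (forall x, hpt n x -> ~ fixes_pt n g x) /\ exists xi et, hyp_fixed n g xi et.

(* the axis: geodesic of H^n joining the two fixed points at infinity *)
Definition axis (n : nat) (g : mat) (x : vec) : Prop :=
  exists xi et, hyp_fixed n g xi et /\ hpt n x /\
    exists a b, 0 < a /\ 0 < b /\ forall i, (i <= n)%nat -> x i = a * xi i + b * et i.

Definition Ax (n : nat) (G : mat -> Prop) (A : vec -> Prop) : Prop :=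
  exists g, G g /\ hyperbolic n g /\ forall x, A x <-> axis n g x.

Definition is_subgroup (n : nat) (K : mat -> Prop) : Prop :=
  K (mid n) /\ (forall a b, K a -> K b -> K (mmul n a b)) /\
  (forall a, K a -> exists b, K b /\ mmul n a b = mid n /\ mmul n b a = mid n).

Definition mdist_ge (n : nat) (A B : mat) (e : R) : Prop :=
  exists i j, (i <= n)%nat /\ (j <= n)%nat /\ e <= Rabs (A i j - B i j).

Definition discrete (n : nat) (G : mat -> Prop) : Prop :=
  forall g, G g -> exists e, 0 < e /\ forall h, G h -> h <> g -> mdist_ge n h g e.

Definition Kleinian (n : nat) (G : mat -> Prop) : Prop :=
  (forall g, G g -> Lorentz n g) /\ is_subgroup n G /\ discrete n G.

Definition e0 : vec := fun i => if Nat.eqb i 0 then 1 else 0.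

(* limit set: accumulation points on the boundary sphere of an orbit G.e0
   (Klein model projection x |-> x / x_0) *)
Definition limit_set (n : nat) (G : mat -> Prop) (xi : vec) : Prop :=
  bpt n xi /\ exists u : nat -> mat, (forall k, G (u k)) /\
    (forall k l, u k = u l -> k = l) /\
    forall i, (1 <= i <= n)%nat ->
      Un_cv (fun k => mvec n (u k) e0 i / mvec n (u k) e0 0%nat) (xi i).

Definition non_elementary (n : nat) (G : mat -> Prop) : Prop :=
  exists a b c, limit_set n G a /\ limit_set n G b /\ limit_set n G c /\
    ~ veq n a b /\ ~ veq n b c /\ ~ veq n a c.

Definition torsion_free (n : nat) (G : mat -> Prop) : Prop :=
  forall g, G g -> forall k, (0 < k)%nat -> mpow n g k = mid n -> g = mid n.

Definition fin_generated (n : nat) (G : mat -> Prop) : Prop :=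
  exists l : list mat, (forall a, In a l -> G a) /\
    forall K, is_subgroup n K -> (forall a, In a l -> K a) -> forall g, G g -> K g.

(* Main.v *)
Require Import Defs.
From Stdlib Require Import Reals List Arith Lra Lia Psatz ZArith Classical ClassicalEpsilon FunctionalExtensionality FinFun.
Open Scope R_scope.

Definition lin (a : R) (x : vec) (b : R) (y : vec) : vec := fun k => a * x k + b * y k.

Lemma sum_zero (f : nat -> R) N : (forall k, (k <= N)%nat -> f k = 0) -> sum_f_R0 f N = 0.
Proof. intros H. rewrite (sum_eq f (fun _ => 0)) by auto. rewrite sum_cte. ring. Qed.

Lemma sum_delta (f : nat -> R) N i : (i <= N)%nat ->
  sum_f_R0 (fun k => if Nat.eqb k i then f k else 0) N = f i.
Proof.
  induction N; intros Hi.
  - assert (i = 0%nat) by lia. subst. simpl. reflexivity.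
  - cbn [sum_f_R0]. destruct (Nat.eq_dec i (S N)).
    + subst. rewrite Nat.eqb_refl. rewrite sum_zero; [lra|].
      intros k Hk. destruct (Nat.eqb_spec k (S N)); [lia|reflexivity].
    + rewrite IHN by lia. destruct (Nat.eqb_spec (S N) i); [lia|ring].
Qed.

Lemma sum_swap (f : nat -> nat -> R) n m :
  sum_f_R0 (fun k => sum_f_R0 (fun l => f k l) m) n =
  sum_f_R0 (fun l => sum_f_R0 (fun k => f k l) n) m.
Proof.
  induction n; simpl.
  - reflexivity.
  - rewrite IHn. rewrite <- sum_plus. reflexivity.
Qed.

Lemma sum_nonneg (f : nat -> R) N : (forall k, (k <= N)%nat -> 0 <= f k) -> 0 <= sum_f_R0 f N.
Proof. intros H. rewrite <- (sum_zero (fun _ => 0) N) by auto. apply sum_Rle. auto. Qed.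

Lemma term_le_sum (f : nat -> R) N i : (forall k, (k <= N)%nat -> 0 <= f k) -> (i <= N)%nat ->
  f i <= sum_f_R0 f N.
Proof.
  induction N; intros H Hi.
  - assert (i = 0%nat) by lia. subst. simpl. lra.
  - simpl. destruct (Nat.eq_dec i (S N)).
    + subst. assert (0 <= sum_f_R0 f N). { apply sum_nonneg. intros; apply H; lia. }
      lra.
    + assert (f i <= sum_f_R0 f N) by (apply IHN; intros; try apply H; lia).
      assert (0 <= f (S N)) by (apply H; lia). lra.
Qed.

Lemma lor_ext n x x' y y' : veq n x x' -> veq n y y' -> lor n x y = lor n x' y'.
Proof. intros H1 H2. unfold lor. apply sum_eq. intros i Hi. rewrite H1, H2 by lia. reflexivity. Qed.

Lemma lor_sym n x y : lor n x y = lor n y x.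
Proof. unfold lor. apply sum_eq. intros; ring. Qed.

Lemma lor_lin_l n a x b y z : lor n (lin a x b y) z = a * lor n x z + b * lor n y z.
Proof.
  unfold lor, lin. rewrite !scal_sum, <- sum_plus. apply sum_eq. intros; ring.
Qed.

Lemma lor_lin_r n a x b y z : lor n z (lin a x b y) = a * lor n z x + b * lor n z y.
Proof. rewrite lor_sym, lor_lin_l, (lor_sym n x), (lor_sym n y). ring. Qed.

Lemma mvec_ext n A x y i : veq n x y -> mvec n A x i = mvec n A y i.
Proof. intros H. unfold mvec. apply sum_eq. intros k Hk. rewrite H by lia. reflexivity. Qed.

Lemma mvec_lin n A a x b y i : mvec n A (lin a x b y) i = a * mvec n A x i + b * mvec n A y i.
Proof. unfold mvec, lin. rewrite !scal_sum, <- sum_plus. apply sum_eq. intros; ring. Qed.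

Lemma mvec_mmul n A B x i : (i <= n)%nat -> mvec n (mmul n A B) x i = mvec n A (mvec n B x) i.
Proof.
  intros Hi. unfold mvec, mmul.
  rewrite (sum_eq _ (fun k => sum_f_R0 (fun l => A i l * B l k * x k) n)).
  2:{ intros k Hk. unfold inrange. rewrite (proj2 (Nat.leb_le _ _) Hi), (proj2 (Nat.leb_le _ _) Hk).
      simpl. rewrite Rmult_comm, scal_sum. apply sum_eq. intros; ring. }
  rewrite sum_swap. apply sum_eq. intros l Hl. rewrite scal_sum. apply sum_eq. intros; ring.
Qed.

Lemma mvec_mid n x i : (i <= n)%nat -> mvec n (mid n) x i = x i.
Proof.
  intros Hi. unfold mvec, mid.
  rewrite (sum_eq _ (fun k => if Nat.eqb k i then x k else 0)).
  - apply sum_delta; auto.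
  - intros k Hk. unfold inrange. rewrite (proj2 (Nat.leb_le _ _) Hi), (proj2 (Nat.leb_le _ _) Hk).
    simpl. rewrite Nat.eqb_sym. destruct (Nat.eqb k i); ring.
Qed.

Lemma inrange_true n i j : (i <= n)%nat -> (j <= n)%nat -> inrange n i j = true.
Proof. intros. unfold inrange. rewrite (proj2 (Nat.leb_le _ _) H), (proj2 (Nat.leb_le _ _) H0). reflexivity. Qed.

Lemma inrange_false n i j : inrange n i j = false -> (n < i)%nat \/ (n < j)%nat.
Proof. unfold inrange. intros H. apply Bool.andb_false_iff in H. destruct H as [H|H]; apply Nat.leb_gt in H; auto. Qed.

Lemma inrange_true_inv n i j : inrange n i j = true -> (i <= n)%nat /\ (j <= n)%nat.
Proof. unfold inrange. intros H. apply Bool.andb_true_iff in H. destruct H as [H1 H2]. apply Nat.leb_le in H1, H2. auto. Qed.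

Lemma mmul_clean n A B : clean n (mmul n A B).
Proof. intros i j H. unfold mmul. destruct (inrange n i j) eqn:E; auto.
  apply inrange_true_inv in E. lia. Qed.

Lemma mid_clean n : clean n (mid n).
Proof. intros i j H. unfold mid. destruct (inrange n i j) eqn:E; simpl; auto.
  apply inrange_true_inv in E. lia. Qed.

Lemma mpow_clean n A k : clean n (mpow n A k).
Proof. destruct k; simpl. apply mid_clean. apply mmul_clean. Qed.

Lemma mmul_assoc n A B C : mmul n (mmul n A B) C = mmul n A (mmul n B C).
Proof.
  extensionality i; extensionality j. unfold mmul.
  destruct (inrange n i j) eqn:E; auto. apply inrange_true_inv in E. destruct E as [Hi Hj].
  rewrite (sum_eq _ (fun k => sum_f_R0 (fun l => A i l * B l k * C k j) n)).
  2:{ intros k Hk. rewrite inrange_true by lia. rewrite Rmult_comm, scal_sum. apply sum_eq; intros; ring. }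
  rewrite (sum_eq (fun k => A i k * _) (fun k => sum_f_R0 (fun l => A i k * B k l * C l j) n)).
  2:{ intros k Hk. rewrite inrange_true by lia. rewrite scal_sum. apply sum_eq; intros; ring. }
  apply sum_swap.
Qed.

Lemma mmul_mid_l n B : clean n B -> mmul n (mid n) B = B.
Proof.
  intros HB. extensionality i; extensionality j. unfold mmul.
  destruct (inrange n i j) eqn:E.
  - apply inrange_true_inv in E. destruct E as [Hi Hj].
    rewrite (sum_eq _ (fun k => if Nat.eqb k i then B k j else 0)).
    + apply (sum_delta (fun k => B k j)); auto.
    + intros k Hk. unfold mid. rewrite inrange_true by lia. simpl. rewrite Nat.eqb_sym.
      destruct (Nat.eqb k i); ring.
  - symmetry. apply HB. apply inrange_false; auto.
Qed.

Lemma mmul_mid_r n A : clean n A -> mmul n A (mid n) = A.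
Proof.
  intros HA. extensionality i; extensionality j. unfold mmul.
  destruct (inrange n i j) eqn:E.
  - apply inrange_true_inv in E. destruct E as [Hi Hj].
    rewrite (sum_eq _ (fun k => if Nat.eqb k j then A i k else 0)).
    + apply (sum_delta (fun k => A i k)); auto.
    + intros k Hk. unfold mid. rewrite inrange_true by lia. simpl.
      destruct (Nat.eqb k j); ring.
  - symmetry. apply HA. apply inrange_false; auto.
Qed.

Lemma mpow_add n A a b : mpow n A (a + b) = mmul n (mpow n A a) (mpow n A b).
Proof.
  induction a; simpl.
  - rewrite mmul_mid_l; auto. apply mpow_clean.
  - rewrite IHa, mmul_assoc. reflexivity.
Qed.

Lemma mpow_succ_r n A k : clean n A -> mpow n A (S k) = mmul n (mpow n A k) A.
Proof.
  intros HA. replace (S k) with (k + 1)%nat by lia. rewrite mpow_add. simpl.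
  rewrite mmul_mid_r; auto.
Qed.

Lemma mpow_inv n X Y k : clean n X -> clean n Y -> mmul n X Y = mid n ->
  mmul n (mpow n X k) (mpow n Y k) = mid n.
Proof.
  intros HX HY HXY. induction k.
  - simpl. apply mmul_mid_l, mid_clean.
  - rewrite (mpow_succ_r n Y) by auto. simpl.
    rewrite mmul_assoc, <- (mmul_assoc n (mpow n X k)), IHk, mmul_mid_l; auto.
Qed.

Lemma cancel_l n X Xi Y Z : mmul n Xi X = mid n -> clean n Y -> clean n Z ->
  mmul n X Y = mmul n X Z -> Y = Z.
Proof.
  intros H HY HZ E. rewrite <- (mmul_mid_l n Y), <- (mmul_mid_l n Z) by auto.
  rewrite <- H, !mmul_assoc, E. reflexivity.
Qed.

Lemma cancel_r n X Xr Y Z : mmul n X Xr = mid n -> clean n Y -> clean n Z ->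
  mmul n Y X = mmul n Z X -> Y = Z.
Proof.
  intros H HY HZ E. rewrite <- (mmul_mid_r n Y), <- (mmul_mid_r n Z) by auto.
  rewrite <- H, <- !mmul_assoc, E. reflexivity.
Qed.

Lemma mpow_in n K A k : is_subgroup n K -> K A -> K (mpow n A k).
Proof. intros [H1 [H2 H3]] HA. induction k; simpl; auto. Qed.

Definition eig n (A : mat) (x : vec) (t : R) := forall i, (i <= n)%nat -> mvec n A x i = t * x i.
Definition Pres n (A : mat) := forall x y, lor n (mvec n A x) (mvec n A y) = lor n x y.
Definition unit (j : nat) : vec := fun k => if Nat.eqb k j then 1 else 0.

Lemma mvec_scale n A c x i : mvec n A (fun k => c * x k) i = c * mvec n A x i.
Proof. unfold mvec. rewrite scal_sum. apply sum_eq; intros; ring. Qed.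

Lemma lor_scale_l n c x y : lor n (fun k => c * x k) y = c * lor n x y.
Proof. unfold lor. rewrite scal_sum. apply sum_eq; intros; ring. Qed.
Lemma lor_scale_r n c x y : lor n x (fun k => c * y k) = c * lor n x y.
Proof. unfold lor. rewrite scal_sum. apply sum_eq; intros; ring. Qed.

Lemma eig_veq n A x y a : veq n x y -> eig n A x a -> eig n A y a.
Proof. intros H E i Hi. rewrite <- (mvec_ext n A x y) by auto. rewrite E, H; auto. Qed.

Lemma eig_mmul n A B x a b : eig n A x a -> eig n B x b -> eig n (mmul n A B) x (a * b).
Proof.
  intros EA EB i Hi. rewrite mvec_mmul by auto.
  rewrite (mvec_ext n A _ (fun k => b * x k)) by (intros k Hk; apply EB; auto).
  rewrite mvec_scale, EA by auto. ring.
Qed.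

Lemma eig_mid n x : eig n (mid n) x 1.
Proof. intros i Hi. rewrite mvec_mid; auto; ring. Qed.

Lemma eig_mpow n A x a k : eig n A x a -> eig n (mpow n A k) x (a ^ k).
Proof.
  intros E. induction k; simpl. apply eig_mid. apply eig_mmul; auto.
Qed.

Lemma eig_inv n A Ai x a : a <> 0 -> eig n A x a -> mmul n Ai A = mid n -> eig n Ai x (/ a).
Proof.
  intros Ha E H i Hi.
  assert (mvec n (mmul n Ai A) x i = x i) by (rewrite H, mvec_mid; auto).
  rewrite mvec_mmul in H0 by auto.
  rewrite (mvec_ext n Ai _ (fun k => a * x k)) in H0 by (intros k Hk; apply E; auto).
  rewrite mvec_scale in H0. rewrite <- H0. field. auto.
Qed.

Lemma lor_sq0 n y : y 0%nat = 0 -> lor n y y = sum_f_R0 (fun k => y k * y k) n.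
Proof.
  intros H. unfold lor. apply sum_eq. intros k Hk. unfold eta.
  destruct k; simpl. rewrite H; ring. ring.
Qed.

Lemma lor_unit n j x : (j <= n)%nat -> lor n (unit j) x = eta j * x j.
Proof.
  intros Hj. unfold lor, unit.
  rewrite (sum_eq _ (fun k => if Nat.eqb k j then eta k * x k else 0)).
  - apply (sum_delta (fun k => eta k * x k)); auto.
  - intros k Hk. destruct (Nat.eqb k j); ring.
Qed.

Lemma mvec_unit n A i j : (j <= n)%nat -> mvec n A (unit j) i = A i j.
Proof.
  intros Hj. unfold mvec, unit.
  rewrite (sum_eq _ (fun k => if Nat.eqb k j then A i k else 0)).
  - apply (sum_delta (fun k => A i k)); auto.
  - intros k Hk. destruct (Nat.eqb k j); ring.
Qed.

Lemma eta_sq j : eta j * eta j = 1.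
Proof. unfold eta. destruct (Nat.eqb j 0); ring. Qed.
Lemma eta_abs j : Rabs (eta j) = 1.
Proof. unfold eta. destruct (Nat.eqb j 0); [rewrite Rabs_left; lra | rewrite Rabs_right; lra]. Qed.

Lemma lor_lin_lin n a x b y c u d v :
  lor n (lin a x b y) (lin c u d v) =
  a * c * lor n x u + a * d * lor n x v + b * c * lor n y u + b * d * lor n y v.
Proof. rewrite lor_lin_l, !lor_lin_r. ring. Qed.

Lemma bpt_L n xi et : bpt n xi -> bpt n et -> ~ veq n xi et -> lor n xi et < 0.
Proof.
  intros [H0 H1] [H2 H3] Hne.
  set (d := lin 1 xi (-1) et).
  assert (Hd : lor n d d = -2 * lor n xi et).
  { unfold d. rewrite lor_lin_lin, H1, H3, (lor_sym n et xi). ring. }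
  assert (Hd0 : d 0%nat = 0) by (unfold d, lin; rewrite H0, H2; ring).
  rewrite lor_sq0 in Hd by auto.
  destruct (Rlt_or_le (lor n xi et) 0) as [|Hle]; auto. exfalso. apply Hne.
  intros i Hi.
  assert (d i * d i <= sum_f_R0 (fun k => d k * d k) n).
  { apply (term_le_sum (fun k => d k * d k)); auto. intros; nra. }
  assert (0 <= sum_f_R0 (fun k => d k * d k) n) by (apply sum_nonneg; intros; nra).
  assert (Hdi : d i = 0) by nra. unfold d, lin in Hdi. lra.
Qed.

Lemma bpt_coord n xi i : bpt n xi -> (i <= n)%nat -> Rabs (xi i) <= 1.
Proof.
  intros [H0 H1] Hi.
  set (y := lin 1 xi (-1) (unit 0)).
  assert (Hy0 : y 0%nat = 0) by (unfold y, lin, unit; simpl; rewrite H0; ring).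
  assert (Hy : lor n y y = 1).
  { unfold y. rewrite lor_lin_lin, H1, (lor_sym n xi (unit 0)), !lor_unit by lia.
    unfold unit, eta; simpl. rewrite H0. ring. }
  rewrite lor_sq0 in Hy by auto.
  assert (y i * y i <= 1).
  { rewrite <- Hy. apply (term_le_sum (fun k => y k * y k)); auto. intros; nra. }
  destruct i.
  - rewrite H0, Rabs_R1. lra.
  - assert (y (S i) = xi (S i)) by (unfold y, lin, unit; simpl; ring).
    rewrite H2 in H. apply Rabs_le. nra.
Qed.

Definition Bd (M L : R) : R :=
  let R0 := 1 + (4 + 8 * M) / (-2 * L) in 2 + 2 * R0 * M + R0.

Lemma abs_inv a b : Rabs a <= b -> -b <= a <= b.
Proof. intros H. pose proof (Rle_abs a). pose proof (Rle_abs (-a)). rewrite Rabs_Ropp in H1. lra. Qed.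

Lemma quad_bound (K M w : R) : 0 < K -> 0 <= M -> K * (w * w) <= 4 + 8 * M * Rabs w ->
  Rabs w <= 1 + (4 + 8 * M) / K.
Proof.
  intros HK HM H.
  assert (0 <= (4 + 8 * M) / K) by (unfold Rdiv; apply Rmult_le_pos; [lra| left; apply Rinv_0_lt_compat; lra]).
  destruct (Rle_or_lt (Rabs w) 1). lra.
  assert (w * w = Rabs w * Rabs w) by (rewrite <- Rabs_mult; rewrite Rabs_right; nra).
  rewrite H2 in H.
  assert (K * Rabs w <= 4 + 8 * M).
  { apply Rmult_le_reg_r with (Rabs w). lra. nra. }
  assert (Rabs w <= (4 + 8 * M) / K).
  { apply Rmult_le_reg_l with K. lra. replace (K * ((4 + 8 * M) / K)) with (4 + 8 * M) by (field; lra). lra. }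
  lra.
Qed.

Lemma bound_entries n xi et A t s M :
  bpt n xi -> bpt n et -> lor n xi et < 0 -> Pres n A -> eig n A xi t -> eig n A et s ->
  1 <= M -> / M <= t <= M -> forall i j, (i <= n)%nat -> (j <= n)%nat ->
  Rabs (A i j) <= Bd M (lor n xi et).
Proof.
  intros Hxi Het HL HA Ex Ee HM Ht i j Hi Hj.
  pose proof Hxi as [Hx0 Hxx]. pose proof Het as [He0 Hee].
  set (L := lor n xi et) in *.
  assert (HMp : 0 < / M) by (apply Rinv_0_lt_compat; lra).
  assert (Htp : 0 < t) by lra.
  assert (Hts : t * s = 1).
  { assert (E := HA xi et).
    rewrite (lor_ext n (mvec n A xi) (fun k => t * xi k) (mvec n A et) (fun k => s * et k)) in E
      by (intros k Hk; auto).
    rewrite lor_scale_l, lor_scale_r in E. fold L in E.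
    apply Rmult_eq_reg_r with L; lra. }
  set (w := mvec n A (unit j)).
  assert (Hc3 : lor n w w = eta j).
  { unfold w. rewrite HA, lor_unit by auto. unfold unit. rewrite Nat.eqb_refl. ring. }
  assert (Hc1 : t * lor n w xi = eta j * xi j).
  { assert (E := HA (unit j) xi). rewrite lor_unit in E by auto. rewrite <- E, <- lor_scale_r.
    apply lor_ext; intros k Hk; [reflexivity| symmetry; apply Ex; auto]. }
  assert (Hc2 : s * lor n w et = eta j * et j).
  { assert (E := HA (unit j) et). rewrite lor_unit in E by auto. rewrite <- E, <- lor_scale_r.
    apply lor_ext; intros k Hk; [reflexivity| symmetry; apply Ee; auto]. }
  set (c1 := lor n w xi) in *. set (c2 := lor n w et) in *. set (c3 := lor n w w) in *.
  assert (Hxj := bpt_coord n xi j Hxi Hj). assert (Hej := bpt_coord n et j Het Hj).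
  assert (Hxi' := bpt_coord n xi i Hxi Hi).
  assert (Hej2 := eta_abs j).
  assert (Bc1 : Rabs c1 <= M).
  { assert (c1 = / t * (eta j * xi j)) by (rewrite <- Hc1; field; lra).
    rewrite H, Rabs_mult, Rabs_mult, Hej2, Rabs_inv, (Rabs_right t) by lra.
    assert (/ t <= M).
    { apply Rmult_le_reg_l with t; auto. rewrite Rinv_r by lra.
      assert (/ M * M = 1) by (field; lra). nra. }
    assert (0 <= / t) by (left; apply Rinv_0_lt_compat; lra).
    assert (0 <= Rabs (xi j)) by apply Rabs_pos. nra. }
  assert (Bc2 : Rabs c2 <= M).
  { assert (c2 = t * (eta j * et j)) by (rewrite <- Hc2; transitivity ((t * s) * c2); [rewrite Hts; ring | ring]).
    rewrite H, Rabs_mult, Rabs_mult, Hej2, (Rabs_right t) by lra.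
    assert (0 <= Rabs (et j)) by apply Rabs_pos. nra. }
  assert (Bc3 : Rabs c3 <= 1) by (rewrite Hc3, Hej2; lra).
  set (w0 := w 0%nat).
  set (z := lin 1 w (- w0) xi). set (z' := lin 1 w (- w0) et).
  assert (Hz0 : z 0%nat = 0) by (unfold z, lin; rewrite Hx0; unfold w0; ring).
  assert (Hz'0 : z' 0%nat = 0) by (unfold z', lin; rewrite He0; unfold w0; ring).
  assert (Hwx : lor n xi w = c1) by (rewrite lor_sym; reflexivity).
  assert (Hwe : lor n et w = c2) by (rewrite lor_sym; reflexivity).
  assert (Hex : lor n et xi = L) by (rewrite lor_sym; reflexivity).
  assert (Hzz : lor n z z = c3 - 2 * w0 * c1).
  { unfold z. rewrite lor_lin_lin. fold c3 c1. rewrite Hwx, Hxx. ring. }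
  assert (Hz'z' : lor n z' z' = c3 - 2 * w0 * c2).
  { unfold z'. rewrite lor_lin_lin. fold c3 c2. rewrite Hwe, Hee. ring. }
  set (D := lin 1 z (-1) z').
  assert (HD0 : D 0%nat = 0) by (unfold D, lin; rewrite Hz0, Hz'0; ring).
  assert (HDD : lor n D D = -2 * L * (w0 * w0)).
  { unfold D, z, z', lin. 
    rewrite (lor_ext n _ (fun k => w0 * lin 1 et (-1) xi k) _ (fun k => w0 * lin 1 et (-1) xi k))
      by (intros k Hk; unfold lin; ring).
    rewrite lor_scale_l, lor_scale_r, lor_lin_lin, Hxx, Hee, Hex. fold L. ring. }
  assert (Hineq : lor n D D <= 2 * lor n z z + 2 * lor n z' z').
  { rewrite !lor_sq0 by auto. rewrite !scal_sum, <- sum_plus. apply sum_Rle.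
    intros k Hk. unfold D, lin. generalize (z k) (z' k); intros a b. assert (0 <= (a+b)*(a+b)) by apply Rle_0_sqr. lra. }
  assert (HK : 0 < -2 * L) by lra.
  assert (Hq : (-2 * L) * (w0 * w0) <= 4 + 8 * M * Rabs w0).
  { rewrite <- HDD. eapply Rle_trans; [exact Hineq|]. rewrite Hzz, Hz'z'.
    apply abs_inv in Bc1 as []; apply abs_inv in Bc2 as []. apply abs_inv in Bc3 as [].
    destruct (Rle_or_lt 0 w0).
    - rewrite Rabs_right by lra. nra.
    - rewrite Rabs_left by lra. nra. }
  assert (HM0 : 0 <= M) by lra. assert (Bw0 := quad_bound _ _ _ HK HM0 Hq).
  set (R0 := 1 + (4 + 8 * M) / (-2 * L)) in *.
  assert (Hzi : z i * z i <= 1 + 2 * R0 * M).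
  { assert (z i * z i <= lor n z z).
    { rewrite lor_sq0 by auto. apply (term_le_sum (fun k => z k * z k)); auto. intros; nra. }
    rewrite Hzz in H.
    assert (Rabs (w0 * c1) <= R0 * M).
    { rewrite Rabs_mult. apply Rmult_le_compat; auto using Rabs_pos. }
    apply abs_inv in H0 as []. apply abs_inv in Bc3 as []. nra. }
  assert (HAij : A i j = z i + w0 * xi i).
  { unfold z, lin. rewrite <- (mvec_unit n A i j) by auto. fold w. ring. }
  unfold Bd. fold R0. rewrite HAij.
  eapply Rle_trans; [apply Rabs_triang|].
  assert (Rabs (z i) <= 1 + z i * z i).
  { destruct (Rle_or_lt 0 (z i)); [rewrite Rabs_right by lra|rewrite Rabs_left by lra]; nra. }
  assert (Rabs (w0 * xi i) <= R0).
  { rewrite Rabs_mult. assert (0 <= Rabs w0) by apply Rabs_pos. assert (0 <= Rabs (xi i)) by apply Rabs_pos. nra. }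
  lra.
Qed.

Lemma ts_one n A xi et t s : lor n xi et <> 0 -> Pres n A -> eig n A xi t -> eig n A et s -> t * s = 1.
Proof.
  intros HL HA Ex Ee.
  assert (E := HA xi et).
  rewrite (lor_ext n (mvec n A xi) (fun k => t * xi k) (mvec n A et) (fun k => s * et k)) in E
    by (intros k Hk; auto).
  rewrite lor_scale_l, lor_scale_r in E.
  apply Rmult_eq_reg_r with (lor n xi et); auto. lra.
Qed.

Lemma axis_scale (L : R) : L < 0 -> exists a, 0 < a /\ a * a * (-2 * L) = 1.
Proof.
  intros HL. exists (/ sqrt (-2 * L)).
  assert (0 < sqrt (-2 * L)) by (apply sqrt_lt_R0; lra).
  split. apply Rinv_0_lt_compat; auto.
  rewrite <- (sqrt_sqrt (-2 * L)) at 3 by lra. field. lra.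
Qed.

Lemma hpt_lin n xi et a b : bpt n xi -> bpt n et -> 0 < a -> 0 < b ->
  2 * a * b * lor n xi et = -1 -> hpt n (lin a xi b et).
Proof.
  intros [H0 H1] [H2 H3] Ha Hb E. split.
  - rewrite lor_lin_lin, H1, H3, (lor_sym n et xi). lra.
  - unfold lin. rewrite H0, H2. lra.
Qed.

Lemma no_t1 n A xi et t s : bpt n xi -> bpt n et -> lor n xi et < 0 -> Pres n A ->
  eig n A xi t -> eig n A et s -> (forall x, hpt n x -> ~ fixes_pt n A x) -> t <> 1.
Proof.
  intros Hx He HL HA Ex Ee Hno Ht.
  assert (s = 1). { pose proof (ts_one n A xi et t s ltac:(lra) HA Ex Ee). subst. lra. }
  destruct (axis_scale _ HL) as [a [Ha Ha2]].
  apply (Hno (lin a xi a et)).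
  - apply hpt_lin; auto. lra.
  - intros i Hi. rewrite mvec_lin, Ex, Ee by auto. subst. unfold lin. ring.
Qed.

Lemma null_in_plane n v x y p q : bpt n v -> bpt n x -> bpt n y -> lor n x y < 0 ->
  veq n v (lin p x q y) -> veq n v x \/ veq n v y.
Proof.
  intros [Hv0 Hvv] [Hx0 Hxx] [Hy0 Hyy] HL E.
  rewrite (lor_ext n v (lin p x q y) v (lin p x q y)) in Hvv by auto.
  rewrite lor_lin_lin, Hxx, Hyy, (lor_sym n y x) in Hvv.
  assert (p * q = 0) by nra.
  assert (Hv0' := E 0%nat (Nat.le_0_l n)). unfold lin in Hv0'. rewrite Hv0, Hx0, Hy0 in Hv0'.
  destruct (Rmult_integral _ _ H).
  - right. intros i Hi. rewrite E by auto. unfold lin. subst. assert (q = 1) by lra. subst. ring.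
  - left. intros i Hi. rewrite E by auto. unfold lin. subst. assert (p = 1) by lra. subst. ring.
Qed.

Lemma veq_sym n x y : veq n x y -> veq n y x.
Proof. intros H i Hi. symmetry; auto. Qed.
Lemma veq_trans n x y z : veq n x y -> veq n y z -> veq n x z.
Proof. intros H1 H2 i Hi. rewrite H1; auto. Qed.

Lemma axis_form n h xi' et' x : hyp_fixed n h xi' et' -> axis n h x ->
  exists p q, veq n x (lin p xi' q et').
Proof.
  intros Hf [a [b [Hab [Hx [p [q [Hp [Hq E]]]]]]]].
  destruct Hf as [_ [_ [_ [_ [_ Hall]]]]].
  destruct Hab as [Ha [Hb [Hne [Fa [Fb _]]]]].
  destruct (Hall a Ha Fa) as [A1|A1]; destruct (Hall b Hb Fb) as [B1|B1].
  - exfalso. apply Hne. eapply veq_trans; [exact A1| apply veq_sym; auto].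
  - exists p, q. intros i Hi. rewrite E by auto. unfold lin. rewrite A1, B1; auto.
  - exists q, p. intros i Hi. rewrite E by auto. unfold lin. rewrite A1, B1 by auto. ring.
  - exfalso. apply Hne. eapply veq_trans; [exact A1| apply veq_sym; auto].
Qed.

Lemma fixes_eig n A z : fixes_bpt n A z -> exists t, 0 < t /\ eig n A z t.
Proof. intros [t [Ht E]]. exists t. split; auto. Qed.

Lemma share n g h xi et :
  hyp_fixed n g xi et -> hyperbolic n h -> (forall x, axis n g x <-> axis n h x) ->
  (exists t, 0 < t /\ eig n h xi t) /\ (exists s, 0 < s /\ eig n h et s).
Proof.
  intros Hg [_ [xi' [et' Hh]]] Hax.
  pose proof Hg as [Hxi [Het [Hne _]]].
  pose proof Hh as [Hxi' [Het' [Hne' [Fx' [Fe' _]]]]].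
  assert (HL := bpt_L n xi et Hxi Het Hne).
  assert (HL' := bpt_L n xi' et' Hxi' Het' Hne').
  destruct (axis_scale _ HL) as [a [Ha Ha2]].
  assert (A1 : axis n g (lin a xi a et)).
  { exists xi, et. split; auto. split. apply hpt_lin; auto. lra.
    exists a, a. split; [auto|split; [auto| intros; reflexivity]]. }
  assert (A2 : axis n g (lin (2 * a) xi (a / 2) et)).
  { exists xi, et. split; auto. split. apply hpt_lin; auto; try lra.
    exists (2 * a), (a / 2). split; [lra|]. split; [lra|]. intros; reflexivity. }
  apply Hax in A1, A2.
  destruct (axis_form _ _ _ _ _ Hh A1) as [p1 [q1 E1]].
  destruct (axis_form _ _ _ _ _ Hh A2) as [p2 [q2 E2]].
  set (c := 2 / (3 * a)).
  assert (Vx : veq n xi (lin (c * p2 - c * p1 / 2) xi' (c * q2 - c * q1 / 2) et')).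
  { intros i Hi. pose proof (E1 i Hi). pose proof (E2 i Hi). unfold lin in *.
    unfold c. apply Rmult_eq_reg_l with (3 * a / 2); [|lra].
    field_simplify; [|lra]. field_simplify in H; field_simplify in H0. nra. }
  assert (Ve : veq n et (lin (c * (2 * p1) - c * p2) xi' (c * (2 * q1) - c * q2) et')).
  { intros i Hi. pose proof (E1 i Hi). pose proof (E2 i Hi). unfold lin in *.
    unfold c. apply Rmult_eq_reg_l with (3 * a / 2); [|lra].
    field_simplify; [|lra]. field_simplify in H; field_simplify in H0. nra. }
  apply fixes_eig in Fx', Fe'.
  destruct Fx' as [t1 [Ht1 Et1]]. destruct Fe' as [t2 [Ht2 Et2]].
  split.
  - destruct (null_in_plane _ _ _ _ _ _ Hxi Hxi' Het' HL' Vx) as [V|V].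
    + exists t1. split; auto. eapply eig_veq; [apply veq_sym, V| auto].
    + exists t2. split; auto. eapply eig_veq; [apply veq_sym, V| auto].
  - destruct (null_in_plane _ _ _ _ _ _ Het Hxi' Het' HL' Ve) as [V|V].
    + exists t1. split; auto. eapply eig_veq; [apply veq_sym, V| auto].
    + exists t2. split; auto. eapply eig_veq; [apply veq_sym, V| auto].
Qed.

Fixpoint allL (m N : nat) : list (list nat) :=
  match m with
  | O => (nil :: nil)
  | S m' => flat_map (fun c => map (cons c) (allL m' N)) (seq 0 (S N))
  end.

Lemma in_allL N l : Forall (fun c => (c <= N)%nat) l -> In l (allL (length l) N).
Proof.
  induction l; intros HF; cbn [length allL]. left; auto.
  inversion HF; subst. apply in_flat_map. exists a. split.
  - apply in_seq. lia.
  - apply in_map. auto.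
Qed.

Lemma map_eq_in {A B : Type} (f g : A -> B) l x : map f l = map g l -> In x l -> f x = g x.
Proof.
  induction l; simpl; intros E Hx. contradiction.
  injection E as E1 E2. destruct Hx; subst; auto.
Qed.

Lemma up_mono a b : a <= b -> (up a <= up b)%Z.
Proof.
  intros H. destruct (archimed a) as [A1 A2]. destruct (archimed b) as [B1 B2].
  assert (IZR (up a) < IZR (up b) + 1) by lra.
  rewrite <- plus_IZR in H0. apply lt_IZR in H0. lia.
Qed.

Lemma up_pos a : 0 <= a -> (0 <= up a)%Z.
Proof. intros H. destruct (archimed a) as [A1 A2]. assert (0 < IZR (up a)) by lra.
  apply lt_IZR in H0. lia. Qed.

Lemma up_close a b : up a = up b -> Rabs (a - b) < 1.
Proof.
  intros E. destruct (archimed a) as [A1 A2]. destruct (archimed b) as [B1 B2].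
  rewrite E in A1, A2. apply Rabs_def1; lra.
Qed.

Lemma grid_pigeon (n : nat) (F : nat -> mat) (B d : R) :
  0 < d -> (forall p i j, (i <= n)%nat -> (j <= n)%nat -> Rabs (F p i j) <= B) ->
  exists p p', p <> p' /\ forall i j, (i <= n)%nat -> (j <= n)%nat -> Rabs (F p i j - F p' i j) < d.
Proof.
  intros Hd HB. apply NNPP. intros Hno.
  set (cell := fun x => Z.to_nat (up ((x + B) / d))).
  set (idx := list_prod (seq 0 (S n)) (seq 0 (S n))).
  set (code := fun p => map (fun ij => cell (F p (fst ij) (snd ij))) idx).
  set (N := Z.to_nat (up (2 * B / d))).
  assert (Hidx : forall i j, (i <= n)%nat -> (j <= n)%nat -> In (i, j) idx).
  { intros. apply in_prod; apply in_seq; lia. }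
  assert (Hidx' : forall ij, In ij idx -> (fst ij <= n)%nat /\ (snd ij <= n)%nat).
  { intros [i j] H. apply in_prod_iff in H. destruct H as [H1 H2]. apply in_seq in H1, H2. simpl. lia. }
  assert (Hrange : forall x, Rabs x <= B -> 0 <= (x + B) / d <= 2 * B / d).
  { intros x Hx. pose proof (Rle_abs x). pose proof (Rle_abs (-x)). rewrite Rabs_Ropp in H0.
    assert (0 < / d) by (apply Rinv_0_lt_compat; lra).
    split; unfold Rdiv. apply Rmult_le_pos; lra. apply Rmult_le_compat_r; lra. }
  assert (Hinj : forall p p', code p = code p' -> p = p').
  { intros p p' E. destruct (Nat.eq_dec p p') as [|Hne]; auto. exfalso. apply Hno.
    exists p, p'. split; auto. intros i j Hi Hj.
    assert (E2 := map_eq_in _ _ _ (i, j) E (Hidx i j Hi Hj)). simpl in E2.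
    unfold cell in E2. apply Znat.Z2Nat.inj in E2;
      [| apply up_pos, Hrange, HB; auto | apply up_pos, Hrange, HB; auto].
    apply up_close in E2.
    replace ((F p i j + B) / d - (F p' i j + B) / d) with ((F p i j - F p' i j) / d) in E2 by (field; lra).
    unfold Rdiv in E2. rewrite Rabs_mult, (Rabs_right (/ d)) in E2
      by (left; apply Rinv_0_lt_compat; lra).
    apply Rmult_lt_reg_r with (/ d). apply Rinv_0_lt_compat; lra. rewrite Rinv_r; lra. }
  set (P := length (allL (length idx) N)).
  assert (ND : NoDup (map code (seq 0 (S P)))).
  { apply FinFun.Injective_map_NoDup. intros x y; apply Hinj. apply seq_NoDup. }
  assert (INC : incl (map code (seq 0 (S P))) (allL (length idx) N)).
  { intros l Hl. apply in_map_iff in Hl. destruct Hl as [p [Hp _]]. subst l.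
    replace (length idx) with (length (code p)) by (unfold code; apply length_map).
    apply in_allL. apply Forall_forall. intros c Hc. unfold code in Hc.
    apply in_map_iff in Hc. destruct Hc as [[i j] [Hc Hij]]. subst c.
    apply Hidx' in Hij. simpl in *. destruct Hij.
    unfold cell, N. apply Znat.Z2Nat.inj_le.
    - apply up_pos, Hrange, HB; auto.
    - apply up_pos. assert (0 <= B) by (pose proof (HB 0%nat 0%nat 0%nat ltac:(lia) ltac:(lia)); pose proof (Rabs_pos (F 0%nat 0%nat 0%nat)); lra).
      unfold Rdiv. apply Rmult_le_pos; [lra| left; apply Rinv_0_lt_compat; lra].
    - apply up_mono, Hrange, HB; auto. }
  apply NoDup_incl_length in INC; auto.
  rewrite length_map, length_seq in INC. unfold P in INC. lia.
Qed.

Lemma least_nat (P : nat -> Prop) q : P q -> exists q', P q' /\ (q' = 0%nat \/ exists k, q' = S k /\ ~ P k).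
Proof.
  induction q; intros H. exists 0%nat; auto.
  destruct (classic (P q)). apply IHq; auto.
  exists (S q). split; auto. right. exists q; auto.
Qed.

Lemma scal1 T s0 p : 1 < T -> 0 < s0 < 1 -> exists q, s0 <= T ^ p * s0 ^ q <= 1.
Proof.
  intros HT HS.
  assert (HTp : 1 <= T ^ p) by (rewrite <- (pow_O T); apply Rle_pow; lia || lra).
  destruct (pow_lt_1_zero s0 ltac:(rewrite Rabs_right; lra) (/ T ^ p)) as [N HN].
  { apply Rinv_0_lt_compat; lra. }
  assert (P0 : T ^ p * s0 ^ N <= 1).
  { specialize (HN N (le_n N)). rewrite Rabs_right in HN by (left; apply pow_lt; lra).
    apply Rmult_lt_compat_l with (r := T ^ p) in HN; [|lra]. rewrite Rinv_r in HN; lra. }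
  destruct (least_nat (fun q => T ^ p * s0 ^ q <= 1) N P0) as [q [Hq [->|[k [-> Hk]]]]].
  - exists 0%nat. simpl in *. lra.
  - exists (S k). split; auto. simpl. apply Rnot_le_lt in Hk.
    assert (s0 * 1 < s0 * (T ^ p * s0 ^ k)) by (apply Rmult_lt_compat_l; lra). lra.
Qed.

Lemma scal T s0 p : 0 < T -> 0 < s0 -> (1 < T /\ s0 < 1) \/ (T < 1 /\ 1 < s0) ->
  exists q, / (s0 + / s0) <= T ^ p * s0 ^ q <= s0 + / s0.
Proof.
  intros HT HS Hc.
  assert (HiS : s0 * / s0 = 1) by (field; lra).
  assert (HiS0 : 0 < / s0) by (apply Rinv_0_lt_compat; lra).
  assert (HM1 : 1 <= s0 + / s0).
  { destruct Hc as [[_ H]|[_ H]].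
    - assert (1 < / s0) by (apply Rmult_lt_reg_l with s0; lra). lra.
    - lra. }
  assert (HMi : / (s0 + / s0) <= 1).
  { rewrite <- Rinv_1. apply Rinv_le_contravar; lra. }
  assert (HMS : / (s0 + / s0) <= s0).
  { apply Rmult_le_reg_l with (s0 + / s0). lra. rewrite Rinv_r by lra. nra. }
  destruct Hc as [[H1 H2]|[H1 H2]].
  - destruct (scal1 T s0 p H1 ltac:(lra)) as [q Hq]. exists q. lra.
  - assert (1 < / T) by (apply Rmult_lt_reg_l with T; [lra| rewrite Rinv_r; lra]).
    assert (0 < / s0 < 1) by (split; [lra| apply Rmult_lt_reg_l with s0; lra]).
    destruct (scal1 (/ T) (/ s0) p H H0) as [q Hq]. exists q.
    rewrite !pow_inv in Hq. rewrite <- Rinv_mult in Hq.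
    assert (0 < T ^ p * s0 ^ q) by (apply Rmult_lt_0_compat; apply pow_lt; lra).
    assert (1 <= T ^ p * s0 ^ q).
    { destruct Hq as [_ Hq]. rewrite <- (Rinv_inv (T ^ p * s0 ^ q)). rewrite <- Rinv_1.
      apply Rinv_le_contravar; auto; try lra. apply Rinv_0_lt_compat; auto. }
    assert (T ^ p * s0 ^ q <= s0).
    { destruct Hq as [Hq _].
      assert (/ / (T ^ p * s0 ^ q) <= / / s0) by (apply Rinv_le_contravar; auto).
      rewrite !Rinv_inv in H5. exact H5. }
    lra.
Qed.

Lemma inv_range M t : 1 <= M -> / M <= t <= M -> / M <= / t <= M.
Proof.
  intros HM [H1 H2]. assert (0 < / M) by (apply Rinv_0_lt_compat; lra).
  split.
  - apply Rinv_le_contravar; lra.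
  - rewrite <- (Rinv_inv M). apply Rinv_le_contravar; lra.
Qed.

Lemma final n (G H : mat -> Prop) g u ui gi p q p' q' :
  is_subgroup n H -> (forall A, H A -> clean n A) ->
  H u -> H ui -> mmul n u ui = mid n -> mmul n ui u = mid n ->
  mmul n gi g = mid n -> clean n g -> clean n gi ->
  (p < p')%nat -> mmul n (mpow n g p) (mpow n u q) = mmul n (mpow n g p') (mpow n u q') ->
  exists k, (0 < k)%nat /\ H (mpow n g k).
Proof.
  intros HHs Hcl Hu Hui E1 E2 E3 Cg Cgi Hpp E.
  assert (Cu := Hcl u Hu). assert (Cui := Hcl ui Hui).
  replace p' with (p + (p' - p))%nat in E by lia. set (d := (p' - p)%nat) in *.
  rewrite mpow_add, mmul_assoc in E.
  apply (cancel_l n _ (mpow n gi p)) in E; [| apply mpow_inv; auto | apply mpow_clean | apply mmul_clean].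
  exists d. split; [unfold d; lia|].
  destruct (le_lt_dec q' q) as [Hq|Hq].
  - replace q with ((q - q') + q')%nat in E by lia. rewrite mpow_add in E.
    apply (cancel_r n _ (mpow n ui q')) in E; [| apply mpow_inv; auto | apply mpow_clean | apply mpow_clean].
    rewrite <- E. apply mpow_in; auto.
  - replace q' with ((q' - q) + q)%nat in E by lia. rewrite mpow_add, <- mmul_assoc in E.
    rewrite <- (mmul_mid_l n (mpow n u q)) in E at 1 by apply mpow_clean.
    apply (cancel_r n _ (mpow n ui q)) in E; [| apply mpow_inv; auto | apply mid_clean | apply mmul_clean].
    assert (Hm := mpow_in n H u (q' - q) HHs Hu).
    pose proof HHs as [_ [_ Hinv]]. destruct (Hinv _ Hm) as [v [Hv [Ev1 Ev2]]].
    replace (mpow n g d) with v; auto.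
    rewrite <- (mmul_mid_r n (mpow n g d)) by apply mpow_clean.
    rewrite <- Ev1, <- mmul_assoc, <- E, mmul_mid_l; auto.
Qed.

Theorem lemma2p9 (n : nat) (G H : mat -> Prop) :
  Kleinian n G -> non_elementary n G -> fin_generated n G -> torsion_free n G ->
  is_subgroup n H -> (forall h, H h -> G h) ->
  (forall A, Ax n G A <-> Ax n H A) ->
  forall g, G g -> hyperbolic n g -> exists k, (0 < k)%nat /\ H (mpow n g k).
Proof.
  intros HK _ _ _ HHs HHG HAx g Hg Hhyp.
  destruct HK as [HLor [HGs Hdisc]].
  assert (Pr : forall A, G A -> Pres n A) by (intros A HA; exact (proj1 (proj2 (HLor A HA)))).
  assert (Cl : forall A, G A -> clean n A) by (intros A HA; exact (proj1 (HLor A HA))).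
  pose proof Hhyp as [Hno [xi [et Hgf]]].
  destruct (proj1 (HAx (axis n g)) (ex_intro _ g (conj Hg (conj Hhyp (fun x => iff_refl _)))))
    as [h [Hh [Hhh Hax]]].
  destruct (share n g h xi et Hgf Hhh Hax) as [[th [Hth Eh]] [sh [Hsh Fh]]].
  pose proof Hgf as [Hxi [Het [Hne [Fgx [Fge _]]]]].
  apply fixes_eig in Fgx, Fge. destruct Fgx as [tg [Htg Eg]]. destruct Fge as [sg [Hsg Fg]].
  assert (HL := bpt_L n xi et Hxi Het Hne).
  assert (tg1 := no_t1 n g xi et tg sg Hxi Het HL (Pr g Hg) Eg Fg Hno).
  assert (th1 := no_t1 n h xi et th sh Hxi Het HL (Pr h (HHG h Hh)) Eh Fh (proj1 Hhh)).
  pose proof HHs as [Hmid [Hmul Hinv]].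
  destruct (Hinv h Hh) as [hi [Hhi [E1 E2]]].
  assert (Ehi : eig n hi xi (/ th)) by (apply (eig_inv n h); auto; lra).
  assert (Fhi : eig n hi et (/ sh)) by (apply (eig_inv n h); auto; lra).
  assert (Hthi : 0 < / th) by (apply Rinv_0_lt_compat; lra).
  assert (Hshi : 0 < / sh) by (apply Rinv_0_lt_compat; lra).
  assert (Hu : exists u ui Su Su2, H u /\ H ui /\ mmul n u ui = mid n /\ mmul n ui u = mid n /\
     eig n u xi Su /\ 0 < Su /\ eig n u et Su2 /\ 0 < Su2 /\ ((1 < tg /\ Su < 1) \/ (tg < 1 /\ 1 < Su))).
  { assert (Hi1 : th < 1 -> 1 < / th).
    { intros. apply Rmult_lt_reg_l with th; auto. rewrite Rinv_r; lra. }
    assert (Hi2 : 1 < th -> / th < 1).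
    { intros. apply Rmult_lt_reg_l with th; [lra|]. rewrite Rinv_r; lra. }
    destruct (Rlt_or_le tg 1); destruct (Rlt_or_le th 1).
    - exists hi, h, (/ th), (/ sh). repeat split; auto.
    - exists h, hi, th, sh. repeat split; auto. right. split; auto. lra.
    - exists h, hi, th, sh. repeat split; auto. left. split; auto. lra.
    - exists hi, h, (/ th), (/ sh). repeat split; auto. left. split; [lra|]. apply Hi2. lra. }
  destruct Hu as [u [ui [Su [Su2 [Hu [Hui [Eu1 [Eu2 [Eu [HS [Fu [HS' Hc]]]]]]]]]]]].
  set (M := Su + / Su).
  assert (HM : 1 <= M).
  { unfold M. assert (0 < / Su) by (apply Rinv_0_lt_compat; lra).
    destruct Hc as [[_ H1]|[_ H1]].
    - assert (1 < / Su) by (apply Rmult_lt_reg_l with Su; [lra| rewrite Rinv_r; lra]). lra.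
    - lra. }
  assert (Hsc : forall p, exists q, / M <= tg ^ p * Su ^ q <= M) by (intros p; apply scal; auto).
  set (qf := fun p => proj1_sig (constructive_indefinite_description _ (Hsc p))).
  assert (Hqf : forall p, / M <= tg ^ p * Su ^ (qf p) <= M)
    by (intros p; unfold qf; destruct (constructive_indefinite_description _ _); auto).
  set (W := fun p => mmul n (mpow n g p) (mpow n u (qf p))).
  assert (GW : forall p, G (W p)).
  { intros p. pose proof HGs as [_ [HGm _]]. apply HGm; apply mpow_in; auto. }
  assert (EW : forall p, eig n (W p) xi (tg ^ p * Su ^ (qf p))) by (intros; apply eig_mmul; apply eig_mpow; auto).
  assert (FW : forall p, eig n (W p) et (sg ^ p * Su2 ^ (qf p))) by (intros; apply eig_mmul; apply eig_mpow; auto).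
  set (B := Bd M (lor n xi et)).
  assert (BW : forall p i j, (i <= n)%nat -> (j <= n)%nat -> Rabs (W p i j) <= B).
  { intros p i j Hi Hj. eapply bound_entries; eauto. }
  assert (HB0 : 0 <= B) by (pose proof (BW 0%nat 0%nat 0%nat (Nat.le_0_l n) (Nat.le_0_l n));
    pose proof (Rabs_pos (W 0%nat 0%nat 0%nat)); lra).
  pose proof HGs as [Gmid [Gmul Ginv]].
  destruct (Hdisc (mid n) Gmid) as [e [He Hsep]].
  set (d := e / (INR (S n) * B + 1)).
  assert (HnB : 0 <= INR (S n) * B) by (apply Rmult_le_pos; auto; apply pos_INR).
  assert (Hd : 0 < d) by (unfold d; apply Rdiv_lt_0_compat; lra).
  assert (Hd2 : INR (S n) * B * d < e).
  { unfold d. apply Rmult_lt_reg_r with (INR (S n) * B + 1); [lra|].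
    replace (INR (S n) * B * (e / (INR (S n) * B + 1)) * (INR (S n) * B + 1))
      with (INR (S n) * B * e) by (field; lra). nra. }
  destruct (grid_pigeon n W B d Hd BW) as [p [p' [Hpp Hclose]]].
  assert (Heq : forall p p', (forall i j, (i <= n)%nat -> (j <= n)%nat -> Rabs (W p i j - W p' i j) < d) ->
                 W p = W p').
  { intros a a' Hcl.
    destruct (Ginv (W a) (GW a)) as [b [Gb [Eb1 Eb2]]].
    assert (Eb : eig n b xi (/ (tg ^ a * Su ^ (qf a)))).
    { apply (eig_inv n (W a)); auto. pose proof (Hqf a). assert (0 < / M) by (apply Rinv_0_lt_compat; lra). lra. }
    assert (Fb : eig n b et (/ (sg ^ a * Su2 ^ (qf a)))).
    { apply (eig_inv n (W a)); auto. apply Rgt_not_eq. apply Rmult_lt_0_compat; apply pow_lt; auto. }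
    assert (Bb : forall i j, (i <= n)%nat -> (j <= n)%nat -> Rabs (b i j) <= B).
    { intros i j Hi Hj. eapply bound_entries; eauto. apply inv_range; auto. }
    destruct (classic (mmul n b (W a') = mid n)) as [Hc1|Hc1].
    - symmetry. apply (cancel_l n b (W a)); auto using mmul_clean. rewrite Hc1, Eb2. reflexivity.
    - exfalso. destruct (Hsep _ (Gmul _ _ Gb (GW a')) Hc1) as [i [j [Hi [Hj Hge]]]].
      assert (Hm : forall X, mmul n b X i j = sum_f_R0 (fun k => b i k * X k j) n) by (intros; unfold mmul; rewrite inrange_true; auto). rewrite <- Eb2, !Hm in Hge.
      rewrite <- minus_sum in Hge.
      assert (Rabs (sum_f_R0 (fun k => b i k * W a' k j - b i k * W a k j) n) <= INR (S n) * B * d).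
      { eapply Rle_trans; [apply Rsum_abs|].
        replace (INR (S n) * B * d) with (sum_f_R0 (fun _ => B * d) n) by (rewrite sum_cte; ring).
        apply sum_Rle. intros k Hk.
        replace (b i k * W a' k j - b i k * W a k j) with (b i k * (W a' k j - W a k j)) by ring.
        rewrite Rabs_mult. apply Rmult_le_compat; auto using Rabs_pos.
        left. rewrite <- Rabs_Ropp. replace (- (W a' k j - W a k j)) with (W a k j - W a' k j) by ring.
        apply Hcl; auto. }
      lra. }
  destruct (Nat.lt_total p p') as [Hlt|[Heqp|Hgt]].
  - destruct (Ginv g Hg) as [gi [Ggi [Eg1 Eg2]]].
    eapply (final n G H g u ui gi p (qf p) p' (qf p')); eauto.
  - contradiction.
  - destruct (Ginv g Hg) as [gi [Ggi [Eg1 Eg2]]].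
    eapply (final n G H g u ui gi p' (qf p') p (qf p)); eauto.
    all: symmetry; apply Heq; auto.
Qed.
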